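(* Let $\mathcal{C}$ be a category and $F\colon\mathcal{C}\to\mathcal{E}ns$ a functor satisfying Grothendieck's axioms G0–G6 below (in either variant). Then the full subcategory $\mathcal{C}on(\mathcal{C})$ of non-empty connected objects of $\mathcal{C}$, together with the restriction of $F$ to it, satisfies the axioms C0–C3 below.
   Context: An arrow $f\colon X\to Y$ is a strict epimorphism if for every $g\colon X\to Z$ compatible with $f$ (for all objects $C$ and $u,v\colon C\to X$, $f\circ u=f\circ v$ implies $g\circ u=g\circ v$) there is a unique $k$ with $g=k\circ f$. For a group $H$ acting on an object $X$ by automorphisms (homomorphism $H\to\mathrm{Aut}(X)^{op}$) the quotient $q\colon X\to X/H$ is universal among arrows with $q\circ h=q$ for all $h\in H$. An object $X$ is finite if $F(X)$ is finite. An object $A$ is connected if $A\cong A_1\amalg A_2$ implies $A_1$ or $A_2$ is initial; non-empty means not initial. Grothendieck's axioms (two variants: ''coproducts'' in G2, G5 means either arbitrary small coproducts, or only finite coproducts): G0: for every $X$ and $x\in F(X)$ there are a finite object $Y$, $y\in F(Y)$ and $f\colon Y\to X$ with $F(f)(y)=x$. G1: $\mathcal{C}$ has a terminal object and fibre products. G2: $\mathcal{C}$ has an initial object, coproducts, and quotients of objects by actions of finite groups. G3: every $f\colon X\to Y$ factors as a strict epimorphism $X\to I$ followed by a monomorphism $I\to Y$, and there is a subobject $J\to Y$ with $I\amalg J\cong Y$ via the induced map. G4: $F$ preserves finite limits. G5: $F$ preserves the initial object, coproducts, quotients by actions of finite groups, and sends strict epimorphisms to surjections. G6: $F$ reflects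 isomorphisms. For a pair $(\mathcal{D},F)$, the diagram $\Gamma_F$ has objects $(a,A)$, $a\in F(A)$, and morphisms $(a,A)\to(a',A')$ the arrows $f$ with $F(f)(a)=a'$, preordered by existence of morphisms. Axioms C0–C3 for $(\mathcal{D},F)$: C0: $F(A)\neq\emptyset$ for all $A$ and every arrow of $\mathcal{D}$ is a strict epimorphism. C1: for every $A$ and finite group $H$ acting on $A$, the quotient $A\to A/H$ exists in $\mathcal{D}$ and $F(A)/H\to F(A/H)$ is bijective. C2: each $F(A)$ is finite and $F$ sends strict epimorphisms to surjections. C3: every finite family of objects of $\Gamma_F$ has a meet. *)

(* Defs.v *)
From HB Require Import structures.
From Stdlib Require List.
From mathcomp Require Import all_boot fingroup.
Set Implicit Arguments. Unset Strict Implicit. Unset Printing Implicit Defensive.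

Record Category := Cat {
  Ob :> Type;
  Hom : Ob -> Ob -> Type;
  idm : forall A, Hom A A;
  comp : forall A B D, Hom B D -> Hom A B -> Hom A D;
  comp_id_l : forall A B (f : Hom A B), comp (idm B) f = f;
  comp_id_r : forall A B (f : Hom A B), comp f (idm A) = f;
  comp_assoc : forall A B D E (h : Hom D E) (g : Hom B D) (f : Hom A B),
      comp h (comp g f) = comp (comp h g) f }.
Arguments Hom {c} _ _.
Arguments idm {c} A.
Arguments comp {c A B D} _ _.

Record SetFunctor (C : Category) := SF {
  Fo : C -> Type;
  Fm : forall A B : C, Hom A B -> Fo A -> Fo B;
  Fm_id : forall A x, Fm (idm A) x = x;
  Fm_comp : forall A B D (g : Hom B D) (f : Hom A B) x,
      Fm (comp g f) x = Fm g (Fm f x) }.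
Arguments Fo {C} _ _.
Arguments Fm {C} _ {A B} _ _.

Definition finite_type (T : Type) : Prop := exists s : seq T, forall x, Stdlib.Lists.List.In x s.
Definition surjective (S T : Type) (f : S -> T) : Prop := forall y, exists x, f x = y.
Definition bijective_fun (S T : Type) (f : S -> T) : Prop :=
  (forall x y, f x = f y -> x = y) /\ surjective f.

Section Notions.
Variable C : Category.

Definition mono (X Y : C) (f : Hom X Y) : Prop :=
  forall (Z : C) (u v : Hom Z X), comp f u = comp f v -> u = v.

Definition iso (X Y : C) (f : Hom X Y) : Prop :=
  exists g : Hom Y X, comp g f = idm X /\ comp f g = idm Y.

Definition isomorphic (X Y : C) : Prop := exists f : Hom X Y, iso f.

Definition compatible (X Y Z : C) (f : Hom X Y) (g : Hom X Z) : Prop :=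
  forall (W : C) (u v : Hom W X), comp f u = comp f v -> comp g u = comp g v.

Definition strict_epi (X Y : C) (f : Hom X Y) : Prop :=
  forall (Z : C) (g : Hom X Z), compatible f g ->
    exists k : Hom Y Z, g = comp k f /\ forall k' : Hom Y Z, g = comp k' f -> k' = k.

Definition initial (I : C) : Prop :=
  forall Z : C, exists f : Hom I Z, forall g : Hom I Z, g = f.

Definition terminal (T : C) : Prop :=
  forall Z : C, exists f : Hom Z T, forall g : Hom Z T, g = f.

Definition nonempty (A : C) : Prop := ~ initial A.

Definition is_pullback (X Y S P : C) (f : Hom X S) (g : Hom Y S)
    (p1 : Hom P X) (p2 : Hom P Y) : Prop :=
  comp f p1 = comp g p2 /\
  forall (Z : C) (u : Hom Z X) (v : Hom Z Y), comp f u = comp g v ->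
    exists k : Hom Z P, (comp p1 k = u /\ comp p2 k = v) /\
      forall k' : Hom Z P, comp p1 k' = u -> comp p2 k' = v -> k' = k.

Definition is_coprod (I : Type) (A : I -> C) (S : C) (inj : forall i, Hom (A i) S) : Prop :=
  forall (Z : C) (f : forall i, Hom (A i) Z),
    exists k : Hom S Z, (forall i, comp k (inj i) = f i) /\
      forall k' : Hom S Z, (forall i, comp k' (inj i) = f i) -> k' = k.

Definition is_coprod2 (A1 A2 S : C) (i1 : Hom A1 S) (i2 : Hom A2 S) : Prop :=
  forall (Z : C) (f1 : Hom A1 Z) (f2 : Hom A2 Z),
    exists k : Hom S Z, (comp k i1 = f1 /\ comp k i2 = f2) /\
      forall k' : Hom S Z, comp k' i1 = f1 -> comp k' i2 = f2 -> k' = k.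

Definition connected (A : C) : Prop :=
  forall (A1 A2 S : C) (i1 : Hom A1 S) (i2 : Hom A2 S),
    is_coprod2 i1 i2 -> isomorphic S A -> initial A1 \/ initial A2.

(* action of a finite group gT on X: a homomorphism gT -> Aut(X)^op *)
Definition is_action (gT : finGroupType) (X : C) (act : gT -> Hom X X) : Prop :=
  act 1%g = idm X /\ forall g h : gT, act (g * h)%g = comp (act h) (act g).

Definition is_quotient (gT : finGroupType) (X : C) (act : gT -> Hom X X)
    (Q : C) (q : Hom X Q) : Prop :=
  (forall h, comp q (act h) = q) /\
  forall (Z : C) (g : Hom X Z), (forall h, comp g (act h) = g) ->
    exists k : Hom Q Z, g = comp k q /\ forall k' : Hom Q Z, g = comp k' q -> k' = k.

Record Diagram (J : Category) := Dgm {
  Do : J -> C;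
  Dm : forall a b : J, Hom a b -> Hom (Do a) (Do b);
  Dm_id : forall a, Dm (idm a) = idm (Do a);
  Dm_comp : forall a b c (g : Hom b c) (f : Hom a b), Dm (comp g f) = comp (Dm g) (Dm f) }.

Definition finite_category (J : Category) : Prop :=
  finite_type J /\ forall a b : J, finite_type (Hom a b).

Definition is_cone (J : Category) (D : Diagram J) (L : C) (leg : forall j, Hom L (Do D j)) : Prop :=
  forall (a b : J) (u : Hom a b), comp (Dm D u) (leg a) = leg b.

Definition is_limit (J : Category) (D : Diagram J) (L : C) (leg : forall j, Hom L (Do D j)) : Prop :=
  is_cone leg /\
  forall (Z : C) (c : forall j, Hom Z (Do D j)), is_cone c ->
    exists k : Hom Z L, (forall j, comp (leg j) k = c j) /\
      forall k' : Hom Z L, (forall j, comp (leg j) k' = c j) -> k' = k.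

End Notions.

Section Preservation.
Variables (C : Category) (F : SetFunctor C).

Definition preserves_limit (J : Category) (D : Diagram C J) (L : C)
    (leg : forall j, Hom L (Do D j)) : Prop :=
  forall (Z : Type) (c : forall j, Z -> Fo F (Do D j)),
    (forall (a b : J) (u : Hom a b) z, Fm F (Dm D u) (c a z) = c b z) ->
    exists k : Z -> Fo F L, (forall j z, Fm F (leg j) (k z) = c j z) /\
      forall k' : Z -> Fo F L, (forall j z, Fm F (leg j) (k' z) = c j z) ->
        forall z, k' z = k z.

Definition preserves_finite_limits : Prop :=
  forall (J : Category) (D : Diagram C J) (L : C) (leg : forall j, Hom L (Do D j)),
    finite_category J -> is_limit leg -> preserves_limit leg.

Definition preserves_coprod (I : Type) (A : I -> C) (S : C) (inj : forall i, Hom (A i) S) : Prop :=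
  forall (Z : Type) (f : forall i, Fo F (A i) -> Z),
    exists k : Fo F S -> Z, (forall i x, k (Fm F (inj i) x) = f i x) /\
      forall k' : Fo F S -> Z, (forall i x, k' (Fm F (inj i) x) = f i x) ->
        forall y, k' y = k y.

(* the canonical map F(X)/H -> F(Q) is bijective *)
Definition preserves_quotient (gT : finGroupType) (X : C) (act : gT -> Hom X X)
    (Q : C) (q : Hom X Q) : Prop :=
  surjective (Fm F q) /\
  forall x y : Fo F X, Fm F q x = Fm F q y <-> exists h : gT, Fm F (act h) x = y.

Definition finite_obj (X : C) : Prop := finite_type (Fo F X).

End Preservation.

(* arb = true : arbitrary small coproducts; arb = false : only finite coproducts *)
Definition admissible_index (arb : bool) (I : Type) : Prop :=
  if arb then True else finite_type I.

Definition G0 (C : Category) (F : SetFunctor C) : Prop :=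
  forall (X : C) (x : Fo F X), exists (Y : C) (y : Fo F Y) (f : Hom Y X),
    finite_obj F Y /\ Fm F f y = x.

Definition G1 (C : Category) : Prop :=
  (exists T : C, terminal T) /\
  forall (X Y S : C) (f : Hom X S) (g : Hom Y S),
    exists (P : C) (p1 : Hom P X) (p2 : Hom P Y), is_pullback f g p1 p2.

Definition G2 (arb : bool) (C : Category) : Prop :=
  (exists I : C, initial I) /\
  (forall (I : Type) (A : I -> C), admissible_index arb I ->
     exists (S : C) (inj : forall i, Hom (A i) S), is_coprod inj) /\
  (forall (gT : finGroupType) (X : C) (act : gT -> Hom X X), is_action act ->
     exists (Q : C) (q : Hom X Q), is_quotient act q).

Definition G3 (C : Category) : Prop :=
  forall (X Y : C) (f : Hom X Y),
    exists (I : C) (e : Hom X I) (m : Hom I Y),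
      strict_epi e /\ mono m /\ f = comp m e /\
      exists (J : C) (j : Hom J Y), mono j /\
        exists (S : C) (i1 : Hom I S) (i2 : Hom J S) (u : Hom S Y),
          is_coprod2 i1 i2 /\ comp u i1 = m /\ comp u i2 = j /\ iso u.

Definition G4 (C : Category) (F : SetFunctor C) : Prop := preserves_finite_limits F.

Definition G5 (arb : bool) (C : Category) (F : SetFunctor C) : Prop :=
  (forall I : C, initial I -> Fo F I -> False) /\
  (forall (I : Type) (A : I -> C) (S : C) (inj : forall i, Hom (A i) S),
     admissible_index arb I -> is_coprod inj -> preserves_coprod F inj) /\
  (forall (gT : finGroupType) (X : C) (act : gT -> Hom X X) (Q : C) (q : Hom X Q),
     is_action act -> is_quotient act q -> preserves_quotient F act q) /\
  (forall (X Y : C) (f : Hom X Y), strict_epi f -> surjective (Fm F f)).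

Definition G6 (C : Category) (F : SetFunctor C) : Prop :=
  forall (X Y : C) (f : Hom X Y), bijective_fun (Fm F f) -> iso f.

Definition Grothendieck (arb : bool) (C : Category) (F : SetFunctor C) : Prop :=
  G0 F /\ G1 C /\ G2 arb C /\ G3 C /\ G4 F /\ G5 arb F /\ G6 F.

Section ConCat.
Variable C : Category.

Definition ConOb := {A : C | nonempty A /\ connected A}.

Definition ConCat : Category :=
  @Cat ConOb (fun a b => Hom (proj1_sig a) (proj1_sig b))
    (fun a => idm (proj1_sig a))
    (fun a b d g f => comp g f)
    (fun a b f => comp_id_l f)
    (fun a b f => comp_id_r f)
    (fun a b d e h g f => comp_assoc h g f).

Variable F : SetFunctor C.

Definition ConRestr : SetFunctor ConCat :=
  @SF ConCat (fun a => Fo F (proj1_sig a))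
    (fun a b f x => Fm F f x)
    (fun a x => @Fm_id C F _ x)
    (fun a b d g f x => @Fm_comp C F _ _ _ g f x).
End ConCat.

Section CAxioms.
Variables (D : Category) (F : SetFunctor D).

Definition C0 : Prop :=
  (forall A : D, inhabited (Fo F A)) /\
  (forall (A B : D) (f : Hom A B), strict_epi f).

Definition C1 : Prop :=
  forall (gT : finGroupType) (A : D) (act : gT -> Hom A A), is_action act ->
    exists (Q : D) (q : Hom A Q), is_quotient act q /\ preserves_quotient F act q.

Definition C2 : Prop :=
  (forall A : D, finite_type (Fo F A)) /\
  (forall (A B : D) (f : Hom A B), strict_epi f -> surjective (Fm F f)).

(* The diagram Gamma_F, preordered by existence of morphisms:
   x <= y iff there is a morphism x -> y in Gamma_F *)
Definition GammaOb := {A : D & Fo F A}.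

Definition Gamma_le (x y : GammaOb) : Prop :=
  exists f : Hom (projT1 x) (projT1 y), Fm F f (projT2 x) = projT2 y.

Definition has_meet (l : seq GammaOb) : Prop :=
  exists m : GammaOb, (forall x, Stdlib.Lists.List.In x l -> Gamma_le m x) /\
    forall y : GammaOb, (forall x, Stdlib.Lists.List.In x l -> Gamma_le y x) -> Gamma_le y m.

Definition C3 : Prop := forall l : seq GammaOb, has_meet l.
End CAxioms.

(* Main.v *)
Require Import Defs.
From mathcomp Require Import all_boot fingroup.
Import Defs.
From Stdlib Require Import Classical ClassicalEpsilon PropExtensionality.
Set Implicit Arguments. Unset Strict Implicit. Unset Printing Implicit Defensive.

Section Pre.
Variables (A B : Type) (f : A -> B).
Definition preim (b : B) : option A :=
  match excluded_middle_informative (exists a, f a = b) with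
  | left H => Some (proj1_sig (constructive_indefinite_description _ H))
  | right _ => None end.
Lemma preimP b a : preim b = Some a -> f a = b.
Proof.
rewrite /preim; case: excluded_middle_informative => // H [<-].
exact: proj2_sig (constructive_indefinite_description _ H).
Qed.
Lemma preimN b : preim b = None -> forall a, f a <> b.
Proof. rewrite /preim; case: excluded_middle_informative => // H _ a E; apply: H; by exists a. Qed.
Fixpoint pre (s : list B) : list A :=
  match s with nil => nil | b :: s' =>
    match preim b with Some a => a :: pre s' | None => pre s' end end.
Lemma pre_size s : size (pre s) <= size s.
Proof. elim: s => //= b s IH; case: (preim b) => [a|] /=; [by rewrite ltnS | exact: (leqW IH)]. Qed.
Lemma pre_lt s b0 : List.In b0 s -> (forall a, f a <> b0) -> size (pre s) < size s.
Proof.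
elim: s => //= b s IH [->|Hin] Hn.
  case E: (preim b0) => [a|]; first by have := preimP E; move/Hn.
  by rewrite ltnS pre_size.
case: (preim b) => /=; first by rewrite ltnS IH.
exact: ltn_trans (IH Hin Hn) _.
Qed.
Lemma pre_in (finj : forall x y, f x = f y -> x = y) s a :
  List.In (f a) s -> List.In a (pre s).
Proof.
elim: s => //= b s IH [E|Hin].
  case P: (preim b) => [a'|]; last by have := preimN P (esym E).
  left; apply: finj; by rewrite (preimP P).
case: (preim b) => [a'|]; [right|]; exact: IH.
Qed.
End Pre.

Lemma finite_inj (A B : Type) (f : A -> B) : (forall x y, f x = f y -> x = y) ->
  finite_type B -> finite_type A.
Proof. move=> finj [s Hs]; exists (pre f s) => a; apply: pre_in => //. Qed.

Lemma finite_prod (A B : Type) : finite_type A -> finite_type B -> finite_type (A * B).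
Proof.
move=> [s Hs] [t Ht]; exists (List.list_prod s t) => [[a b]].
by apply/List.in_prod.
Qed.

Lemma finite_surj (A B : Type) (f : A -> B) : surjective f -> finite_type A -> finite_type B.
Proof. move=> fs [s Hs]; exists (List.map f s) => b; have [a <-] := fs b; exact: List.in_map. Qed.

Section PreCat.
Variables (O : Type) (le : O -> O -> bool) (lr : forall a, le a a)
  (lt : forall a b c, le a b -> le b c -> le a c).
Definition PreCat : Category :=
  @Cat O (fun a b => le a b = true) lr (fun a b c g f => lt f g)
   (fun a b f => eq_irrelevance _ _) (fun a b f => eq_irrelevance _ _)
   (fun a b d e h g f => eq_irrelevance _ _).
Lemma PreCat_finite : finite_type O -> finite_category PreCat.
Proof.
move=> HO; split => // a b /=.
case: (le a b).
  by exists [:: erefl true] => x; left; apply: eq_irrelevance.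
by exists [::].
Qed.
End PreCat.

Definition cle (a b : option bool) : bool :=
  match a, b with
  | _, None => true
  | Some true, Some true => true
  | Some false, Some false => true
  | _, _ => false end.
Lemma cle_refl a : cle a a. Proof. by case: a => [[]|]. Qed.
Lemma cle_trans a b c : cle a b -> cle b c -> cle a c.
Proof. by case: a b c => [[]|] [[]|] [[]|]. Qed.
Definition CospanCat := PreCat cle_refl cle_trans.
Lemma CospanCat_finite : finite_category CospanCat.
Proof.
apply: PreCat_finite; exists [:: Some true; Some false; None] => [[[]|]] /=; tauto.
Qed.

Definition vle (a b : Empty_set) : bool := true.
Lemma vle_refl a : vle a a. Proof. by []. Qed.
Lemma vle_trans a b c : vle a b -> vle b c -> vle a c.
Proof. by []. Qed.
Definition EmptyCat := PreCat vle_refl vle_trans.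
Lemma EmptyCat_finite : finite_category EmptyCat.
Proof. by apply: PreCat_finite; exists [::] => [[]]. Qed.

Section Cospan.
Variables (C : Category) (X Y S : C) (f : Hom X S) (g : Hom Y S).
Definition cDo (o : CospanCat) : C :=
  match o with Some true => X | Some false => Y | None => S end.
Definition cDm (a b : CospanCat) : Hom a b -> Hom (cDo a) (cDo b) :=
  match a as a0, b as b0 return Hom (c:=CospanCat) a0 b0 -> Hom (cDo a0) (cDo b0) with
  | Some true, Some true => fun _ => idm X
  | Some false, Some false => fun _ => idm Y
  | None, None => fun _ => idm S
  | Some true, None => fun _ => f
  | Some false, None => fun _ => g
  | Some true, Some false => fun p => False_rect _ (Bool.diff_false_true p)
  | Some false, Some true => fun p => False_rect _ (Bool.diff_false_true p)
  | None, Some _ => fun p => False_rect _ (Bool.diff_false_true p)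
  end.
Lemma cDm_id (a : CospanCat) : cDm (idm a) = idm (cDo a).
Proof. by case: a => [[]|]. Qed.
Lemma cDm_comp (a b c : CospanCat) (h : Hom b c) (k : Hom a b) : cDm (comp h k) = comp (cDm h) (cDm k).
Proof.
move: h k; case: a b c => [[]|] [[]|] [[]|] //= h k;
  by rewrite ?comp_id_l ?comp_id_r.
Qed.
Definition cospanD : Diagram C CospanCat := Dgm cDm_id cDm_comp.
End Cospan.

Section PB.
Variables (C : Category) (X Y S P : C) (f : Hom X S) (g : Hom Y S)
  (p1 : Hom P X) (p2 : Hom P Y).
Definition pleg (j : CospanCat) : Hom P (cDo X Y S j) :=
  match j as j0 return Hom P (cDo X Y S j0) with
  | Some true => p1 | Some false => p2 | None => comp f p1 end.

Lemma pullback_limit : is_pullback f g p1 p2 -> is_limit (D := cospanD f g) pleg.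
Proof.
move=> [E U]; split.
  move=> a b; case: a b => [[]|] [[]|] //= u; rewrite ?comp_id_l //.
move=> Z c Hc.
have E1 : comp f (c (Some true)) = c None := Hc (Some true) None erefl.
have E2 : comp g (c (Some false)) = c None := Hc (Some false) None erefl.
have [k [[k1 k2] ku]] := U Z (c (Some true)) (c (Some false)) (etrans E1 (esym E2)).
exists k; split.
  by case=> [[]|] //=; rewrite -comp_assoc k1.
by move=> k' Hk'; apply: ku; [exact: (Hk' (Some true)) | exact: (Hk' (Some false))].
Qed.
End PB.

Section FLemmas.
Variables (C : Category) (F : SetFunctor C).

Lemma F_pullback (HG4 : G4 F) (X Y S P : C) (f : Hom X S) (g : Hom Y S)
  (p1 : Hom P X) (p2 : Hom P Y) : is_pullback f g p1 p2 ->
  (forall a b, Fm F f a = Fm F g b -> exists r, Fm F p1 r = a /\ Fm F p2 r = b) /\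
  (forall r r', Fm F p1 r = Fm F p1 r' -> Fm F p2 r = Fm F p2 r' -> r = r').
Proof.
move=> Hpb.
have Hpres := HG4 _ _ _ _ CospanCat_finite (pullback_limit Hpb).
split.
  move=> a b Eab.
  pose c (j : CospanCat) (z : unit) : Fo F (cDo X Y S j) :=
    match j as j0 return Fo F (cDo X Y S j0) with
    | Some true => a | Some false => b | None => Fm F f a end.
  have [|k [Hk _]] := Hpres unit c.
    move=> i j; case: i j => [[]|] [[]|] //= u z; rewrite ?Fm_id //.
  exists (k tt); split; [exact: (Hk (Some true) tt) | exact: (Hk (Some false) tt)].
move=> r r' E1 E2.
pose c (j : CospanCat) (z : unit) : Fo F (cDo X Y S j) := Fm F (pleg f p1 p2 j) r.
have [|k [Hk Hu]] := Hpres unit c.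
  move=> i j u z; rewrite /c -Fm_comp.
  by have [Hcone _] := pullback_limit Hpb; rewrite (Hcone i j u).
have -> := Hu (fun _ => r) (fun j z => erefl) tt.
apply: esym; apply: (Hu (fun _ => r')) => j z; rewrite /c.
case: j => [[]|] //=; rewrite !Fm_comp; congr Fm; by [].
Qed.
End FLemmas.

Section Empty.
Variables (C : Category) (T : C).
Definition eDo (o : EmptyCat) : C := match o with end.
Definition eDm (a b : EmptyCat) : Hom a b -> Hom (eDo a) (eDo b) := match a with end.
Lemma eDm_id (a : EmptyCat) : eDm (idm a) = idm (eDo a). Proof. by case: a. Qed.
Lemma eDm_comp (a b c : EmptyCat) (h : Hom b c) (k : Hom a b) : eDm (comp h k) = comp (eDm h) (eDm k).
Proof. by case: a. Qed.
Definition emptyD : Diagram C EmptyCat := Dgm eDm_id eDm_comp.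
Definition eleg (j : EmptyCat) : Hom T (eDo j) := match j with end.
Lemma terminal_limit : terminal T -> is_limit (D := emptyD) eleg.
Proof.
move=> HT; split; first by case.
move=> Z c _; have [k Hk] := HT Z; exists k; split; first by case.
by move=> k' _; apply: Hk.
Qed.
End Empty.

Section FLemmas2.
Variables (C : Category) (F : SetFunctor C).

Lemma F_terminal (HG4 : G4 F) (T : C) : terminal T -> exists t : Fo F T, forall t', t' = t.
Proof.
move=> HT; have Hp := HG4 _ _ _ _ EmptyCat_finite (terminal_limit HT).
have [k [_ Hu]] := Hp unit (fun j => match j with end) (fun a => match a with end).
exists (k tt) => t'; exact: (Hu (fun _ => t') (fun j => match j with end) tt).
Qed.

Lemma F_coprod2 (arb : bool) (HG5 : G5 arb F) (A1 A2 S : C) (i1 : Hom A1 S) (i2 : Hom A2 S) :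
  is_coprod2 i1 i2 ->
  (forall s, (exists x, Fm F i1 x = s) \/ (exists y, Fm F i2 y = s)) /\
  (forall x x', Fm F i1 x = Fm F i1 x' -> x = x') /\
  (forall y y', Fm F i2 y = Fm F i2 y' -> y = y') /\
  (forall x y, Fm F i1 x <> Fm F i2 y).
Proof.
move=> Hc.
pose A (b : bool) : C := if b then A1 else A2.
pose inj (b : bool) : Hom (A b) S := match b as b0 return Hom (A b0) S with true => i1 | false => i2 end.
have Hc' : is_coprod inj.
  move=> Z fb; have [k [[k1 k2] ku]] := Hc Z (fb true) (fb false).
  exists k; split; first by case.
  by move=> k' Hk'; apply: ku; [exact: (Hk' true) | exact: (Hk' false)].
have Hadm : admissible_index arb bool by rewrite /admissible_index; case: ifP => // _; exists [:: true; false] => [[]] /=; tauto.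
have Hp := HG5.2.1 bool A S inj Hadm Hc'.
split.
  move=> s.
  have [k [_ Hu]] := Hp Prop (fun _ _ => True).
  have e1 := Hu (fun _ => True) (fun _ _ => erefl) s.
  have e2 := Hu (fun s => (exists x, Fm F i1 x = s) \/ (exists y, Fm F i2 y = s)).
  have -> : ((exists x, Fm F i1 x = s) \/ (exists y, Fm F i2 y = s)) = True.
    rewrite e1 e2 // => - [] x /=; apply: propositional_extensionality; split=> // _; [left|right]; by exists x.
  done.
split.
  move=> x x' E.
  have [k [Hk _]] := Hp (option (Fo F A1)) (fun b => match b as b0 return Fo F (A b0) -> option (Fo F A1) with true => fun x => Some x | false => fun _ => None end).
  have := Hk true x; have := Hk true x'; rewrite /= E => -> []; done.
split.
  move=> x x' E.
  have [k [Hk _]] := Hp (option (Fo F A2)) (fun b => match b as b0 return Fo F (A b0) -> option (Fo F A2) with false => fun x => Some x | true => fun _ => None end).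
  have := Hk false x; have := Hk false x'; rewrite /= E => -> []; done.
move=> x y E.
have [k [Hk _]] := Hp bool (fun b _ => b).
by have := Hk true x; have := Hk false y; rewrite /= E => ->.
Qed.

Lemma iso_bij (X Y : C) (u : Hom X Y) : iso u -> bijective_fun (Fm F u).
Proof.
move=> [v [E1 E2]]; split.
  move=> x y E; by rewrite -(@Fm_id _ F _ x) -(@Fm_id _ F _ y) -E1 !Fm_comp E.
move=> y; exists (Fm F v y); by rewrite -Fm_comp E2 Fm_id.
Qed.

Lemma initial_iso (I X : C) (u : Hom I X) : initial I -> iso u -> initial X.
Proof.
move=> HI [v [E1 E2]] Z; have [k Hk] := HI Z.
exists (comp k v) => h.
by rewrite -[h]comp_id_r -E2 comp_assoc (Hk (comp h u)).
Qed.

Lemma F_reflect_initial (arb : bool) (HG2 : G2 arb C) (HG5 : G5 arb F) (HG6 : G6 F) (X : C) :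
  (Fo F X -> False) -> initial X.
Proof.
move=> HX; have [I HI] := HG2.1; have [u _] := HI X.
apply: (@initial_iso I X u HI); apply: HG6; split.
  by move=> x; case: (HG5.1 I HI x).
by move=> y; case: (HX y).
Qed.

Lemma F_initial (arb : bool) (HG5 : G5 arb F) (X : C) : initial X -> Fo F X -> False.
Proof. exact: HG5.1. Qed.

End FLemmas2.

Section Pure.
Variable C : Category.

Lemma iso_comp (X Y Z : C) (a : Hom Y Z) (b : Hom X Y) : iso a -> iso b -> iso (comp a b).
Proof.
move=> [a' [Ea1 Ea2]] [b' [Eb1 Eb2]]; exists (comp b' a'); split.
  by rewrite -comp_assoc (comp_assoc a' a b) Ea1 comp_id_l.
by rewrite -comp_assoc (comp_assoc b b' a') Eb2 comp_id_l.
Qed.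

Lemma coprod_initial_iso (A1 A2 S : C) (i1 : Hom A1 S) (i2 : Hom A2 S) :
  is_coprod2 i1 i2 -> initial A2 -> iso i1.
Proof.
move=> Hc HI; have [z _] := HI A1.
have [k [[k1 k2] _]] := Hc A1 (idm A1) z.
exists k; split => //.
have [k0 [_ ku0]] := Hc S i1 i2.
have [zs Hzs] := HI S.
rewrite (ku0 (comp i1 k)); last 2 first.
- by rewrite -comp_assoc k1 comp_id_r.
- by rewrite (Hzs (comp (comp i1 k) i2)) (Hzs i2).
apply: esym; apply: ku0; by rewrite comp_id_l.
Qed.

Lemma strict_epi_iso_comp (X Y Z : C) (m : Hom Y Z) (e : Hom X Y) :
  iso m -> strict_epi e -> strict_epi (comp m e).
Proof.
move=> [n [En1 En2]] He W g Hg.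
have Hg' : compatible e g.
  move=> V u v E; apply: Hg; by rewrite -!comp_assoc E.
have [k [Ek ku]] := He W g Hg'.
exists (comp k n); split.
  by rewrite Ek -comp_assoc (comp_assoc n m e) En1 comp_id_l.
move=> k' Ek'.
have -> : k' = comp (comp k' m) n by rewrite -comp_assoc En2 comp_id_r.
congr comp; apply: ku; by rewrite Ek' comp_assoc.
Qed.

End Pure.

Section Main.
Variables (arb : bool) (C : Category) (F : SetFunctor C).
Hypothesis HG : Grothendieck arb F.

Lemma HG0 : G0 F. Proof. by case: HG. Qed.
Lemma HG1 : G1 C. Proof. by case: HG => _ []. Qed.
Lemma HG2 : G2 arb C. Proof. by case: HG => _ [] _ []. Qed.
Lemma HG3 : G3 C. Proof. by case: HG => _ [] _ [] _ []. Qed.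
Lemma HG4 : G4 F. Proof. by case: HG => _ [] _ [] _ [] _ []. Qed.
Lemma HG5 : G5 arb F. Proof. by case: HG => _ [] _ [] _ [] _ [] _ []. Qed.
Lemma HG6 : G6 F. Proof. by case: HG => _ [] _ [] _ [] _ [] _ []. Qed.

Lemma initial_F (X : C) : initial X <-> (Fo F X -> False).
Proof.
split; first by move=> HX; exact: (F_initial HG5 HX).
exact: (F_reflect_initial HG2 HG5 HG6).
Qed.

Lemma lemma_E (A X : C) (f : Hom X A) (x : Fo F X) : connected A ->
  strict_epi f /\ surjective (Fm F f).
Proof.
move=> HA.
suff Hs : strict_epi f by split => //; exact: HG5.2.2.2.
have [I [e [m [He [_ [-> [J [j [_ [S [i1 [i2 [u [Hc [Eu1 [Eu2 Hu]]]]]]]]]]]]]]]] := HG3 f.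
have [HI|HJ] := HA I J S i1 i2 Hc (ex_intro _ u Hu).
  by case: (proj1 (initial_F I) HI (Fm F e x)).
apply: strict_epi_iso_comp => //.
rewrite -Eu1; apply: iso_comp => //; exact: coprod_initial_iso Hc HJ.
Qed.


Lemma conn_finite (A : C) : connected A -> finite_type (Fo F A).
Proof.
move=> HA; have [[a]|Hn] := classic (inhabited (Fo F A)); last first.
  by exists [::] => a; apply: Hn; constructor.
have [Y [y [f [HY Ef]]]] := HG0 a.
have [_ Hs] := lemma_E f y HA.
exact: finite_surj Hs HY.
Qed.

Lemma pullback_finite (X Y S P : C) (f : Hom X S) (g : Hom Y S) (p1 : Hom P X) (p2 : Hom P Y) :
  is_pullback f g p1 p2 -> finite_type (Fo F X) -> finite_type (Fo F Y) -> finite_type (Fo F P).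
Proof.
move=> Hpb HX HY; have [_ Hu] := F_pullback HG4 Hpb.
apply: (@finite_inj _ _ (fun r => (Fm F p1 r, Fm F p2 r))); last exact: finite_prod.
by move=> r r' [E1 E2]; apply: Hu.
Qed.

Lemma not_connected (K : C) : ~ connected K ->
  exists (A1 A2 S : C) (i1 : Hom A1 S) (i2 : Hom A2 S) (u : Hom S K),
    is_coprod2 i1 i2 /\ iso u /\ inhabited (Fo F A1) /\ inhabited (Fo F A2).
Proof.
move=> Hc; apply: NNPP => Hn; apply: Hc => A1 A2 S i1 i2 Hcop [u Hu].
apply: NNPP => Hor; apply: Hn; exists A1, A2, S, i1, i2, u; do 2 split => //.
split; apply: NNPP => Hi; apply: Hor; [left|right]; apply/initial_F => a; apply: Hi; constructor; exact: a.
Qed.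

Lemma conn_ind (Pr : C -> Prop) :
  (forall K, initial K -> Pr K) ->
  (forall K, nonempty K -> connected K -> Pr K) ->
  (forall (K A1 A2 S : C) (i1 : Hom A1 S) (i2 : Hom A2 S) (u : Hom S K),
     is_coprod2 i1 i2 -> iso u -> Pr A1 -> Pr A2 -> Pr K) ->
  forall K, finite_type (Fo F K) -> Pr K.
Proof.
move=> H0 H1 H2 K [s Hs].
have : size s <= size s by [].
move: {-1}(size s) => n; elim: n K s Hs => [|n IH] K s Hs Hsz.
  apply: H0; apply/initial_F => k; move: (Hs k); case: s Hsz {Hs} => //.
have [HI|HnI] := classic (initial K); first exact: H0.
have [Hc|Hnc] := classic (connected K); first exact: H1.
have [A1 [A2 [S [i1 [i2 [u [Hc [Hu [[a1] [a2]]]]]]]]]] := not_connected Hnc.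
have [Hcov [Hinj1 [Hinj2 Hdisj]]] := F_coprod2 HG5 Hc.
have [Hbu _] := iso_bij F Hu.
apply: (H2 K A1 A2 S i1 i2 u Hc Hu).
  apply: (IH A1 (pre (Fm F (comp u i1)) s)).
    move=> a; apply: pre_in; last exact: Hs.
    by move=> x y; rewrite !Fm_comp => /Hbu /Hinj1.
  rewrite -ltnS; apply: leq_trans Hsz; apply: (pre_lt (b0 := Fm F u (Fm F i2 a2))); first exact: Hs.
  by move=> a; rewrite Fm_comp => /Hbu /Hdisj.
apply: (IH A2 (pre (Fm F (comp u i2)) s)).
  move=> a; apply: pre_in; last exact: Hs.
  by move=> x y; rewrite !Fm_comp => /Hbu /Hinj2.
rewrite -ltnS; apply: leq_trans Hsz; apply: (pre_lt (b0 := Fm F u (Fm F i1 a1))); first exact: Hs.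
by move=> a; rewrite Fm_comp => /Hbu E; apply: (Hdisj a1 a); rewrite E.
Qed.


Lemma component (K : C) : finite_type (Fo F K) -> forall k : Fo F K,
  exists (M : C) (j : Hom M K) (m : Fo F M), nonempty M /\ connected M /\
    (forall x y, Fm F j x = Fm F j y -> x = y) /\ Fm F j m = k.
Proof.
move: K; apply: conn_ind.
- by move=> K0 HI k; case: (proj1 (initial_F K0) HI k).
- move=> K0 Hn Hc k; exists K0, (idm K0), k; do 2 split => //.
  by split; [move=> x y; rewrite !Fm_id | rewrite Fm_id].
move=> K0 A1 A2 S i1 i2 u Hc Hu P1 P2 k.
have [Hcov [Hinj1 [Hinj2 Hdisj]]] := F_coprod2 HG5 Hc.
have [Hbu Hsu] := iso_bij F Hu.
have [s0 Es0] := Hsu k.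
have [[x Ex]|[y Ey]] := Hcov s0.
  have [M [j [m [Hn [HcM [Hj Em]]]]]] := P1 x.
  exists M, (comp u (comp i1 j)), m; do 2 split => //; split.
    by move=> a b; rewrite !Fm_comp => /Hbu /Hinj1 /Hj.
  by rewrite !Fm_comp Em Ex.
have [M [j [m [Hn [HcM [Hj Em]]]]]] := P2 y.
exists M, (comp u (comp i2 j)), m; do 2 split => //; split.
  by move=> a b; rewrite !Fm_comp => /Hbu /Hinj2 /Hj.
by rewrite !Fm_comp Em Ey.
Qed.

Lemma maps_eq (K : C) : finite_type (Fo F K) -> forall (Z : C) (s t : Hom K Z),
  (forall (M : C) (phi : Hom M K), nonempty M -> connected M -> comp s phi = comp t phi) ->
  s = t.
Proof.
move: K; apply: conn_ind.
- move=> K0 HI Z s t _; have [k Hk] := HI Z; by rewrite (Hk s) (Hk t).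
- move=> K0 Hn Hc Z s t H; have := H K0 (idm K0) Hn Hc; by rewrite !comp_id_r.
move=> K0 A1 A2 S i1 i2 u Hc [v [Ev1 Ev2]] P1 P2 Z s t H.
have E1 : comp (comp s u) i1 = comp (comp t u) i1.
  apply: P1 => M phi Hn HcM; rewrite -!comp_assoc; exact: H.
have E2 : comp (comp s u) i2 = comp (comp t u) i2.
  apply: P2 => M phi Hn HcM; rewrite -!comp_assoc; exact: H.
have [k [_ ku]] := Hc Z (comp (comp s u) i1) (comp (comp s u) i2).
have Esu : comp s u = comp t u by rewrite (ku (comp s u)) // (ku (comp t u)).
by rewrite -[s]comp_id_r -[t]comp_id_r -Ev2 !comp_assoc Esu.
Qed.


Lemma lemma_P (A Y S : C) (h : Hom A S) (i : Hom Y S) a y : connected A ->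
  Fm F h a = Fm F i y -> forall a', exists y', Fm F h a' = Fm F i y'.
Proof.
move=> HA E a'.
have [R [r1 [r2 Hpb]]] := HG1.2 A Y S h i.
have [Hex _] := F_pullback HG4 Hpb.
have [r [Er1 Er2]] := Hex a y E.
have [_ Hs] := lemma_E r1 r HA.
have [r' <-] := Hs a'.
exists (Fm F r2 r'); by rewrite -!Fm_comp (proj1 Hpb).
Qed.

Lemma quotient_connected (A Q : C) (q : Hom A Q) : connected A -> inhabited (Fo F A) ->
  surjective (Fm F q) -> connected Q.
Proof.
move=> HA [a] Hq Q1 Q2 S i1 i2 Hc [u [v [Ev1 Ev2]]].
have [Hcov [Hinj1 [Hinj2 Hdisj]]] := F_coprod2 HG5 Hc.
have hsurj : forall s, exists a', Fm F (comp v q) a' = s.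
  move=> s; have [a' Ea'] := Hq (Fm F u s); exists a'.
  by rewrite Fm_comp Ea' -Fm_comp Ev1 Fm_id.
have [[x Ex]|[y Ey]] := Hcov (Fm F (comp v q) a).
  have HP := lemma_P HA (esym Ex).
  right; apply/initial_F => z.
  have [a' Ea'] := hsurj (Fm F i2 z).
  have [y' Ey'] := HP a'.
  by apply: (Hdisj y' z); rewrite -Ey' Ea'.
have HP := lemma_P HA (esym Ey).
left; apply/initial_F => z.
have [a' Ea'] := hsurj (Fm F i1 z).
have [y' Ey'] := HP a'.
by apply: (Hdisj z y'); rewrite -Ey' Ea'.
Qed.


Lemma con_inhabited (A : ConCat C) : inhabited (Fo F (proj1_sig A)).
Proof.
case: A => A [Hn Hc] /=; apply: NNPP => Hi; apply: Hn; apply/initial_F => a.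
by apply: Hi; constructor.
Qed.

Lemma con_strict_epi (A B : ConCat C) (f : Hom A B) : strict_epi f.
Proof.
have [a] := con_inhabited A.
have HcB : connected (proj1_sig B) by case: B f => ? [].
have HcA : connected (proj1_sig A) by case: A f a => ? [].
have [Hse _] := lemma_E f a HcB.
move=> Z g Hg.
have [K [k1 [k2 Hpb]]] := HG1.2 _ _ _ f f.
have HfK := pullback_finite Hpb (conn_finite HcA) (conn_finite HcA).
have Ek : comp (c:=C) g k1 = comp (c:=C) g k2.
  apply: (maps_eq HfK) => M phi Hn HcM; rewrite -!comp_assoc.
  apply: (Hg (exist _ M (conj Hn HcM)) (comp k1 phi) (comp k2 phi)).
  by rewrite /= !comp_assoc (proj1 Hpb).
have Hcomp : @compatible C (proj1_sig A) (proj1_sig B) (proj1_sig Z) f g.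
  move=> W u v E; have [k [[<- <-] _]] := (proj2 Hpb) W u v E.
  by rewrite !comp_assoc Ek.
exact: Hse _ g Hcomp.
Qed.

Lemma con_C1 : C1 (ConRestr F).
Proof.
move=> gT A act Hact.
have [a] := con_inhabited A.
have HcA : connected (proj1_sig A) by case: A act Hact a => ? [].
have [Q0 [q Hq]] := HG2.2.2 gT (proj1_sig A) act Hact.
have Hpres := HG5.2.2.1 gT (proj1_sig A) act Q0 q Hact Hq.
have HnQ : nonempty Q0 by move/initial_F; apply; exact: (Fm F q a).
have HcQ : connected Q0 := quotient_connected HcA (inhabits a) (proj1 Hpres).
exists (exist _ Q0 (conj HnQ HcQ)), q; split; last exact: Hpres.
case: Hq => Hq1 Hq2; split => // Z g Hg; exact: Hq2 (proj1_sig Z) g Hg.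
Qed.

Lemma con_C2 : C2 (ConRestr F).
Proof.
split.
  move=> A; apply: conn_finite; by case: A => ? [].
move=> A B f _; have [a] := con_inhabited A.
have HcB : connected (proj1_sig B) by case: B f => ? [].
exact: (lemma_E f a HcB).2.
Qed.

End Main.

Lemma Gamma_trans (D : Category) (G : SetFunctor D) (x y z : GammaOb G) :
  @Gamma_le D G x y -> @Gamma_le D G y z -> @Gamma_le D G x z.
Proof. move=> [f Ef] [g Eg]; exists (comp g f); by rewrite Fm_comp Ef Eg. Qed.

Lemma C3_from (D : Category) (G : SetFunctor D) (top : GammaOb G) :
  (forall y, @Gamma_le D G y top) ->
  (forall x y, exists m, @Gamma_le D G m x /\ @Gamma_le D G m y /\
      forall z, @Gamma_le D G z x -> @Gamma_le D G z y -> @Gamma_le D G z m) -> C3 G.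
Proof.
move=> Htop Hm; elim=> [|x l [m' [H1 H2]]].
  by exists top; split => // y _; apply: Htop.
have [m [mx [mm' U]]] := Hm x m'.
exists m; split.
  move=> z [<-|Hz] //; exact: Gamma_trans mm' (H1 z Hz).
move=> y Hy; apply: U; first by apply: Hy; left.
by apply: H2 => z Hz; apply: Hy; right.
Qed.

Section Main2.
Variables (arb : bool) (C : Category) (F : SetFunctor C).
Hypothesis HG : Grothendieck arb F.

Lemma con_top : exists top : GammaOb (ConRestr F), forall y, Gamma_le y top.
Proof.
have [T HT] := (HG1 HG).1.
have [t Ht] := F_terminal (HG4 HG) HT.
have HnT : nonempty T by move/(initial_F HG); apply; exact: t.
have HcT : connected T.
  move=> Q1 Q2 S i1 i2 Hc [u Hu].
  have [Hcov [Hinj1 [Hinj2 Hdisj]]] := F_coprod2 (HG5 HG) Hc.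
  have [Hbu _] := iso_bij F Hu.
  have [H1|H1] := classic (initial Q1); first by left.
  have [H2|H2] := classic (initial Q2); first by right.
  have [x1 _] : exists x : Fo F Q1, True.
    apply: NNPP => Hn; apply: H1; apply/(initial_F HG) => x; apply: Hn; by exists x.
  have [x2 _] : exists x : Fo F Q2, True.
    apply: NNPP => Hn; apply: H2; apply/(initial_F HG) => x; apply: Hn; by exists x.
  exfalso; apply: (Hdisj x1 x2); apply: Hbu.
  by rewrite (Ht (Fm F u (Fm F i1 x1))) (Ht (Fm F u (Fm F i2 x2))).
exists (existT (fun A : ConCat C => Fo (ConRestr F) A) (exist _ T (conj HnT HcT)) t).
case=> [[B HB] b]; have [f _] := HT B; exists f; exact: Ht.
Qed.

Lemma con_meet2 (x y : GammaOb (ConRestr F)) : exists m, Gamma_le m x /\ Gamma_le m y /\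
      forall z, Gamma_le z x -> Gamma_le z y -> Gamma_le z m.
Proof.
case: x y => [[A [HnA HcA]] a] [[B [HnB HcB]] b] /=.
have [T HT] := (HG1 HG).1.
have [t Ht] := F_terminal (HG4 HG) HT.
have [tA _] := HT A; have [tB _] := HT B.
have [P [p1 [p2 Hpb]]] := (HG1 HG).2 A B T tA tB.
have [Hex Huq] := F_pullback (HG4 HG) Hpb.
have [p [Ep1 Ep2]] := Hex a b (etrans (Ht _) (esym (Ht _))).
have HfP := pullback_finite HG Hpb (conn_finite HG HcA) (conn_finite HG HcB).
have [M [j [m [HnM [HcM [Hj Em]]]]]] := component HG HfP p.
exists (existT (fun A : ConCat C => Fo (ConRestr F) A) (exist _ M (conj HnM HcM)) m).
split; first by exists (comp p1 j) => /=; rewrite Fm_comp Em Ep1.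
split; first by exists (comp p2 j) => /=; rewrite Fm_comp Em Ep2.
case=> [[D [HnD HcD]] d] [fA EfA] [fB EfB] /=.
simpl in fA, fB, EfA, EfB.
have [tD HtD] := HT D.
have [h [[Eh1 Eh2] _]] := (proj2 Hpb) D fA fB (etrans (HtD _) (esym (HtD _))).
have Ehd : Fm F h d = p.
  by apply: Huq; rewrite -Fm_comp ?Eh1 ?Eh2 ?EfA ?EfB ?Ep1 ?Ep2 // -Fm_comp Eh2 EfB Ep2.
have [R [r1 [r2 HpbR]]] := (HG1 HG).2 M D P j h.
have [HexR HuqR] := F_pullback (HG4 HG) HpbR.
have [r [Er1 Er2]] := HexR m d (etrans Em (esym Ehd)).
have Hiso : iso r2.
  apply: (HG6 HG); split; last exact: (lemma_E HG r2 r HcD).2.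
  move=> r' r'' E; apply: HuqR => //; apply: Hj.
  by rewrite -!Fm_comp (proj1 HpbR) !Fm_comp E.
have [psi [Ep1' Ep2']] := Hiso.
exists (comp r1 psi) => /=.
by rewrite Fm_comp -Er2 -(Fm_comp psi r2) Ep1' Fm_id.
Qed.

End Main2.

Unset Implicit Arguments.

Theorem theorem4p13 (arb : bool) (C : Category) (F : SetFunctor C) :
  Grothendieck arb F ->
  C0 (ConRestr F) /\ C1 (ConRestr F) /\ C2 (ConRestr F) /\ C3 (ConRestr F).
Proof.
move=> HG; split; [split|split; [|split]].
- exact: con_inhabited HG.
- move=> A B f.
  idtac.
  exact: (@con_strict_epi _ _ _ HG A B f).
- exact: con_C1 HG.
- exact: con_C2 HG.
- have [top Htop] := con_top HG; exact: C3_from Htop (con_meet2 HG).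
Qed.
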